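(* Let $F$ be a finite group of order $n$. There is an embedding of $F$ into the alternating group $\mathrm{Alt}(2n+3)$ such that $\mathrm{Alt}(2n+3)$ is generated by the $F$-conjugates of $\mathrm{Alt}(5)$.
   Context: $\mathrm{Alt}(m)$ is the alternating group on $\{1,\dots,m\}$; for $k<m$, $\mathrm{Alt}(k)$ is identified with the subgroup of $\mathrm{Alt}(m)$ consisting of even permutations of $\{1,\dots,k\}$ (fixing all points greater than $k$). *)

(* Defs.v *)
From HB Require Import structures.
From mathcomp Require Import all_boot all_order all_fingroup all_solvable.
Local Open Scope group_scope.
Set Implicit Arguments. Unset Strict Implicit. Unset Printing Implicit Defensive.

(* Alt(k) inside Alt(m) (k <= m): the even permutations of 'I_m (= {0,..,m-1},
   the 0-indexed version of {1,..,m}) that fix every point >= k, i.e. the even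
   permutations of the first k points. *)
Definition Alt_sub (k m : nat) : {set {perm 'I_m}} :=
  [set s in 'Alt_('I_m) | [forall x : 'I_m, (k <= x)%N ==> (s x == x)]].

(* Main.v *)
Require Import Defs.
From HB Require Import structures.
From mathcomp Require Import all_boot all_order all_fingroup all_solvable.
From mathcomp Require Import zify.
Local Open Scope group_scope.
Set Implicit Arguments. Unset Strict Implicit. Unset Printing Implicit Defensive.

Lemma val_tperm (k : nat) (x y z : 'I_k) :
  val (tperm x y z) = if val z == val x then val y else if val z == val y then val x else val z.
Proof.
rewrite !val_eqE; case: tpermP => [->|->|zx zy]; rewrite ?eqxx //.
- by case: ifP => // /eqP ->.
- by do 2!case: eqP => //.
Qed.

Ltac slia := simpl in *; lia.
Section DSec.
Variables (n : nat) (i0 : 'I_n).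
Local Notation m := (2 * n + 3).

Definition half (a : 'I_m) : 'I_n := insubd i0 ((a - 3) %/ 2).

Lemma half_val (a : 'I_m) : 3 <= a -> val (half a) = (a - 3) %/ 2.
Proof.
move=> a3; rewrite /half val_insubd; have := ltn_ord a.
by case: ifP => // /negbT; rewrite -leqNgt => H1 H2; slia.
Qed.

Definition Dfun (s : {perm 'I_n}) (a : 'I_m) : 'I_m :=
  if a < 3 then a else insubd a (3 + 2 * s (half a) + (a - 3) %% 2).

Lemma Dval s (a : 'I_m) : 3 <= a ->
  val (Dfun s a) = 3 + 2 * s (half a) + (a - 3) %% 2.
Proof.
move=> a3; rewrite /Dfun ltnNge a3 /= val_insubd; have := ltn_ord (s (half a)).
by case: ifP => // /negbT; rewrite -leqNgt => H1 H2; slia.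
Qed.

Lemma Dsmall s (a : 'I_m) : a < 3 -> Dfun s a = a.
Proof. by rewrite /Dfun => ->. Qed.

Lemma Dinj s : injective (Dfun s).
Proof.
move=> a b; case: (ltnP a 3) => a3; case: (ltnP b 3) => b3.
- by rewrite !Dsmall.
- rewrite Dsmall // => /(congr1 val); rewrite Dval // => E; exfalso; slia.
- rewrite (Dsmall _ b3) => /(congr1 val); rewrite Dval // => E; exfalso; slia.
move=> /(congr1 val); rewrite !Dval // => E.
have E1 : val (s (half a)) = val (s (half b)) by slia.
have E2 : (a - 3) %% 2 = (b - 3) %% 2 by slia.
move/val_inj/perm_inj/(congr1 val): E1; rewrite !half_val // => E3.
apply: val_inj => /=; slia.
Qed.

Definition D s : {perm 'I_m} := perm (@Dinj s).

Lemma Dsm s (a : 'I_m) : a < 3 -> D s a = a.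
Proof. by rewrite permE => /Dsmall ->. Qed.

Lemma Dv s (a : 'I_m) : 3 <= a -> val (D s a) = 3 + 2 * s (half a) + (a - 3) %% 2.
Proof. by rewrite permE => /Dval. Qed.

Lemma half_D s (a : 'I_m) : 3 <= a -> half (D s a) = s (half a).
Proof.
move=> a3; have h : 3 <= D s a by rewrite Dv //; slia.
apply: val_inj; rewrite half_val // Dv //; slia.
Qed.

Lemma DM s t : D (s * t) = D s * D t.
Proof.
apply/permP => a; rewrite permM.
case: (ltnP a 3) => a3; first by rewrite !Dsm.
have a3' : 3 <= D s a by rewrite Dv //; slia.
apply: val_inj; rewrite !Dv // half_D // permM.
have -> : (3 + 2 * s (half a) + (a - 3) %% 2 - 3) %% 2 = (a - 3) %% 2 by slia.
by [].
Qed.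

Lemma m_pos : 0 < m. Proof. by rewrite addn3. Qed.
Definition pt (i : 'I_n) (b : bool) : 'I_m := insubd (Ordinal m_pos) (3 + 2 * i + b).

Lemma pt_val i b : val (pt i b) = 3 + 2 * i + b.
Proof. rewrite val_insubd; have := ltn_ord i; case: ifP => // /negbT; rewrite -leqNgt; case: b => /=; slia. Qed.

Lemma half_pt i b : half (pt i b) = i.
Proof. apply: val_inj; rewrite half_val pt_val; case: b => /=; slia. Qed.

Lemma D_pt s i b : D s (pt i b) = pt (s i) b.
Proof.
apply: val_inj; rewrite Dv ?pt_val ?half_pt; case: b => /=; slia.
Qed.

Lemma D_inj s t : D s = D t -> s = t.
Proof.
move=> E; apply/permP => i.
have := D_pt s i false; rewrite E D_pt => /(congr1 half).
by rewrite !half_pt => <-.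
Qed.

Lemma D_tperm i j : D (tperm i j) = tperm (pt i false) (pt j false) * tperm (pt i true) (pt j true).
Proof.
apply/permP => a; rewrite permM; apply: val_inj.
rewrite !val_tperm !pt_val.
case: (ltnP a 3) => a3.
  rewrite Dsm //; do !case: eqP => //=; slia.
rewrite Dv // val_tperm.
have := half_val a3; have := ltn_ord a.
move: (half a) => h hv ha.
do !case: eqP => //=; try slia; intros; (try apply: val_inj); slia.
Qed.

Lemma D_even s : ~~ odd_perm (D s).
Proof.
have [ts -> dts] := prod_tpermP s.
elim: ts dts => [|[i j] ts IH] /=.
  have D1 : D 1 = 1 by apply/permP => a; rewrite perm1; case: (ltnP a 3) => a3; [rewrite Dsm | apply: val_inj; rewrite Dv // perm1 half_val //; slia].
  by rewrite big_nil D1 odd_perm1.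
case/andP => dij dts; rewrite big_cons DM odd_permM D_tperm odd_permM !odd_tperm /=.
have ne : forall b, pt i b != pt j b.
  by move=> b; apply: contra dij => /eqP /(congr1 half); rewrite !half_pt => ->.
by rewrite !ne (negbTE (IH dts)).
Qed.
End DSec.
Section RSec.
Variables (gT : finGroupType) (F : {group gT}).
Let F1 : (1 : gT) \in F := group1 F.

Definition rfun (g : gT) (i : 'I_#|F|) : 'I_#|F| :=
  enum_rank_in F1 (enum_val i * (if g \in F then g else 1)).

Lemma rinj g : injective (rfun g).
Proof.
move=> i j /(congr1 enum_val); rewrite /rfun.
have gF : (if g \in F then g else 1) \in F by case: ifP.
rewrite !enum_rankK_in ?groupM ?enum_valP // => /mulIg; exact: enum_val_inj.
Qed.

Definition R g : {perm 'I_#|F|} := perm (@rinj g).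

Lemma RE g i : g \in F -> enum_val (R g i) = enum_val i * g.
Proof. by move=> gF; rewrite permE /rfun gF enum_rankK_in ?groupM ?enum_valP. Qed.

Lemma RM : {in F &, {morph R : x y / x * y}}.
Proof.
move=> x y xF yF; apply/permP => i; apply: enum_val_inj.
by rewrite permM !RE ?groupM // mulgA.
Qed.

Lemma R_inj : {in F &, injective R}.
Proof.
move=> x y xF yF E; have := RE (enum_rank_in F1 1) xF; rewrite E RE //.
by move/mulgI.
Qed.

Lemma R_trans (k0 k : 'I_#|F|) : exists2 g, g \in F & R g k0 = k.
Proof.
exists ((enum_val k0)^-1 * enum_val k); first by rewrite groupM ?groupV ?enum_valP.
by apply: enum_val_inj; rewrite RE ?groupM ?groupV ?enum_valP // mulKVg.
Qed.
End RSec.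

Theorem lemma3p2 (gT : finGroupType) (F : {group gT}) :
  exists f : {morphism F >-> {perm 'I_(2 * #|F| + 3)}},
    [/\ 'injm f,
        f @* F \subset 'Alt_('I_(2 * #|F| + 3)) &
        << \bigcup_(x in f @* F) (Alt_sub 5 (2 * #|F| + 3) :^ x) >> =
          'Alt_('I_(2 * #|F| + 3))].
Proof.
pose i0 : 'I_#|F| := enum_rank_in (group1 F) 1.
pose f g := D i0 (R F g).
have fM : {in F &, {morph f : x y / x * y}}.
  by move=> x y xF yF; rewrite /f RM // DM.
exists (Morphism fM); split.
- by apply/injmP => x y xF yF /= /D_inj; apply: R_inj.
- apply/subsetP => y /morphimP [x _ xF ->]; by rewrite Alt_even /= D_even.
set H := << _ >>.
have n0 : 0 < #|F| by apply/card_gt0P; exists 1.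
pose k0 : 'I_#|F| := insubd i0 0.
have k0v : val k0 = 0 by rewrite val_insubd n0.
have Key : forall g, g \in F -> forall s : {perm 'I_(2 * #|F| + 3)}, ~~ odd_perm s ->
    (forall x : 'I_(2 * #|F| + 3), 3 <= x -> x != f g (pt k0 false) ->
       x != f g (pt k0 true) -> s x = x) -> s \in H.
  move=> g gF s se sfix; apply: mem_gen; apply/bigcupP; exists (f g).
    by rewrite -[f g]/(Morphism fM g) mem_morphim.
  rewrite mem_conjg inE Alt_even odd_permJ se /=; apply/forallP => y; apply/implyP => y5.
  rewrite -{1}(permK (f g) y) permJ sfix ?permK //.
  - by rewrite /f Dv //; slia.
  - rewrite (inj_eq (@perm_inj _ _)); apply/eqP => /(congr1 val); rewrite pt_val k0v; slia.
  - rewrite (inj_eq (@perm_inj _ _)); apply/eqP => /(congr1 val); rewrite pt_val k0v; slia.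
have l2 : 2 < 2 * #|F| + 3 by slia.
have l1 : 1 < 2 * #|F| + 3 by slia.
have l0 : 0 < 2 * #|F| + 3 by slia.
pose z0 : 'I_(2 * #|F| + 3) := Ordinal l0.
pose z1 : 'I_(2 * #|F| + 3) := Ordinal l1.
pose z2 : 'I_(2 * #|F| + 3) := Ordinal l2.
have neqv : forall x y : 'I_(2 * #|F| + 3), val x != val y -> x != y.
  by move=> x y; apply: contra => /eqP ->.
have U : forall a, a != z2 -> tperm a z2 * tperm z0 z1 \in H.
  move=> a az2.
  have se : ~~ odd_perm (tperm a z2 * tperm z0 z1) by rewrite odd_permM !odd_tperm az2.
  case: (ltnP a 3) => a3.
    apply: (Key 1 (group1 F)) => // x x3 _ _.
    rewrite permM !tpermD //; apply: neqv => /=; slia.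
  have [g gF [b ab]] : exists2 g, g \in F & exists b, a = f g (pt k0 b).
    pose k := half i0 a.
    have [g gF gk] := R_trans k0 k.
    exists g => //; exists ((a - 3) %% 2 == 1)%N.
    rewrite /f D_pt gk; apply: val_inj; rewrite pt_val half_val //.
    by case: eqP => /= ?; slia.
  apply: (Key g gF) => // x x3 xa1 xa2.
  have xa : a != x by rewrite eq_sym ab; case: b {ab}.
  rewrite permM !tpermD //; apply: neqv => /=; slia.
have T : forall a b, a != b -> tperm a b * tperm z0 z1 \in H.
  move=> a b ab.
  case: (eqVneq a z2) => [aeq|az2]; first by rewrite aeq tpermC; apply: U; rewrite eq_sym -aeq.
  case: (eqVneq b z2) => [->|bz2]; first exact: U.
  have E : tperm a b * tperm z0 z1 =
     (tperm a z2 * tperm z0 z1) * (tperm b z2 * tperm z0 z1)^-1 * (tperm a z2 * tperm z0 z1).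
    rewrite invMg !tpermV !mulgA; congr (_ * _).
    rewrite -(mulgA (tperm a z2) (tperm z0 z1) (tperm z0 z1)) tperm2 mulg1.
    have := tpermJ b z2 (tperm a z2); rewrite conjgE tpermV mulgA => ->.
    by rewrite tpermR tpermD 1?tpermC // eq_sym.
  move: (U a az2) (U b bz2); rewrite E /H => Ua Ub; by apply: groupM => //; apply: groupM => //; rewrite groupV.
have P : forall ts : seq ('I_(2 * #|F| + 3) * 'I_(2 * #|F| + 3)), all dpair ts ->
    tperm z0 z1 ^+ odd (size ts) * \prod_(t <- ts) tperm t.1 t.2 \in H.
  elim => [|[a b] ts IH] /=; first by rewrite big_nil mulg1 group1.
  case/andP => dab /IH; rewrite big_cons /=.
  case: (odd (size ts)) => /=; rewrite ?expg1 ?expg0 ?mul1g => IH'.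
    have -> : tperm a b * \prod_(t <- ts) tperm t.1 t.2 =
      (tperm a b * tperm z0 z1) * (tperm z0 z1 * \prod_(t <- ts) tperm t.1 t.2).
      by rewrite !mulgA -(mulgA (tperm a b) (tperm z0 z1) (tperm z0 z1)) tperm2 mulg1.
    by rewrite groupM // T.
  have -> : tperm z0 z1 * (tperm a b * \prod_(t <- ts) tperm t.1 t.2) =
      (tperm a b * tperm z0 z1)^-1 * \prod_(t <- ts) tperm t.1 t.2.
    by rewrite invMg !tpermV mulgA.
  by rewrite groupM ?groupV // T.
apply/eqP; rewrite eqEsubset; apply/andP; split.
  rewrite gen_subG; apply/bigcupsP => x _; apply/subsetP => s.
  rewrite mem_conjg inE => /andP [sA _].
  by move: sA; rewrite !Alt_even odd_permJ.
apply/subsetP => s; rewrite Alt_even => se.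
have [ts sE dts] := prod_tpermP s.
have := P ts dts; rewrite -odd_perm_prod // -sE (negbTE se) expg0 mul1g.
by [].
Qed.
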